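(* Let $P$ be a natural unit interval order on $[n]$ with Catalan path $C$, and let $\widetilde{C}$ be the reflection of $C$ about the line $y=n-x$ (which is again a Catalan path from $(0,0)$ to $(n,n)$). Let $\widetilde{P}$ be the natural unit interval order whose Catalan path is $\widetilde{C}$, and let $G=\mathrm{inc}(P)$, $\widetilde{G}=\mathrm{inc}(\widetilde{P})$. Then $X_G(\mathbf{x},t)=X_{\widetilde{G}}(\mathbf{x},t)$.
   Context: A natural unit interval order $P(m_1,\dots,m_{n-1})$ is defined for integers $m_1\le m_2\le\cdots\le m_{n-1}\le n$ with $m_i\ge i$ for all $i$: it is the poset on $[n]$ with $i<_P j$ iff $i<n$ and $j\in\{m_i+1,\dots,n\}$. Its incomparability graph $\mathrm{inc}(P)$ has vertex set $[n]$ and an edge $\{i,j\}$ ($i<j$) iff $j\le m_i$. The Catalan path of $P$ is the lattice path from $(0,0)$ to $(n,n)$ with unit north and east steps whose $i$-th east step lies on the line $y=m_i$ for $i=1,\dots,n-1$ and whose last east step lies on $y=n$; this gives a bijection between natural unit interval orders on $[n]$ and lattice paths from $(0,0)$ to $(n,n)$ staying weakly above $y=x$. For a graph $G$ with vertex set $V\subset\mathbb{P}$, the chromatic quasisymmetric function is $X_G(\mathbf{x},t)=\sum_\kappa t^{\mathrm{asc}(\kappa)}\mathbf{x}_\kappa$, summed over proper colorings $\kappa:V\to\mathbb{P}$, where $\mathbf{x}_\kappa=\prod_{v\in V}x_{\kappa(v)}$ and $\mathrm{asc}(\kappa)$ is the number of edges $\{i,j\}$ with $i<j$ and $\kappa(i)<\kappa(j)$.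 *)

(* Defs.v *)
From HB Require Import structures.
From mathcomp Require Import all_boot all_order all_algebra.
Set Implicit Arguments. Unset Strict Implicit. Unset Printing Implicit Defensive.
Import GRing.Theory.
Local Open Scope ring_scope.

(* Natural unit interval order P(m_1,...,m_{n-1}) on [n], encoded by the list
   m = [:: m_1; ...; m_{n-1}] (so m_i = nth 0 m i.-1, 1-based). *)
Definition nuio (n : nat) (m : seq nat) : bool :=
  [&& size m == n.-1, sorted leq m, all (fun x => x <= n)%N m &
      [forall i : 'I_(n.-1), (i.+1 <= nth 0%N m i)%N]].

(* Catalan path: sequence of unit steps, true = North, false = East.
   The path N^{h_1} E N^{h_2-h_1} E ... N^{h_n-h_{n-1}} E, where
   h = [:: m_1; ...; m_{n-1}; n], is the unique lattice path whose i-th east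
   step lies on y = m_i (and whose last east step lies on y = n). *)
Definition catalan_path (n : nat) (m : seq nat) : seq bool :=
  flatten [seq rcons (nseq d true) false
          | d <- pairmap (fun a b => (b - a)%N) 0%N (rcons m n)].

(* Reflection of a lattice path from (0,0) to (n,n) about the line y = n - x:
   (x,y) |-> (n-y, n-x); traversed from (0,0), step k of the new path is the
   (2n+1-k)-th step of the old path with North and East exchanged. *)
Definition reflect_path (s : seq bool) : seq bool := rev (map negb s).

(* Incomparability graph inc(P(m)) on [n]; vertex v : 'I_n stands for v+1.
   {i,j} with i<j (1-based) is an edge iff j <= m_i. *)
Definition inc_graph (n : nat) (m : seq nat) : rel 'I_n :=
  fun a b => ((a < b)%N && (b < nth 0%N m a)%N) || ((b < a)%N && (a < nth 0%N m b)%N).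

(* Colorings with colors in {1,...,N}: color c : 'I_N stands for c+1. *)
Definition proper_col (n N : nat) (G : rel 'I_n) (k : {ffun 'I_n -> 'I_N}) : bool :=
  [forall i, forall j, G i j ==> (k i != k j)].

Definition asc (n N : nat) (G : rel 'I_n) (k : {ffun 'I_n -> 'I_N}) : nat :=
  #|[set p : 'I_n * 'I_n | [&& (p.1 < p.2)%N, G p.1 p.2 & (k p.1 < k p.2)%N]]|.

(* Coefficient in X_G(x,t) of the monomial x_1^{alpha_0} ... x_N^{alpha_{N-1}}:
   the polynomial in t  sum_{proper kappa with x_kappa = that monomial} t^asc(kappa).
   Every monomial in x_1, x_2, ... arises for some N, so X_G is determined by
   (and equal to) this coefficient function. *)
Definition chromQS_coef (n : nat) (G : rel 'I_n) (N : nat) (alpha : 'I_N -> nat)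
  : {poly int} :=
  \sum_(k : {ffun 'I_n -> 'I_N} | proper_col G k &&
          [forall c : 'I_N, #|[set v | k v == c]| == alpha c]) 'X^(asc G k).

(* Main.v *)
Require Import Defs.
From mathcomp Require Import all_boot all_order all_algebra all_fingroup zify.
Set Implicit Arguments. Unset Strict Implicit. Unset Printing Implicit Defensive.


Lemma iterfixed (T : Type) (f : T -> T) x i : f x = x -> iter i f x = x.
Proof. by move=> fx; elim: i => //= i ->. Qed.

Lemma iterfix (T : eqType) (f : T -> T) (mu : T -> nat) (B : nat) :
  (forall x, mu x < B) -> (forall x, f x != x -> mu x < mu (f x)) ->
  forall x, f (iter B f x) = iter B f x.
Proof.
move=> muB muf x.
suff H : forall i, f (iter i f x) = iter i f x \/ i <= mu (iter i f x).
  by case: (H B) => // h; have := muB (iter B f x); rewrite ltnNge h.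
elim=> [|i IH]; first by right.
case: IH => [fx|le]; first by left; rewrite /= fx fx.
have [e|ne] := eqVneq (f (iter i f x)) (iter i f x).
  by left; rewrite /= e e.
by right; rewrite /=; apply: leq_trans (muf _ ne).
Qed.

Lemma iterfixS (T : eqType) (f : T -> T) (mu : T -> nat) (B : nat) :
  (forall x, mu x < B) -> (forall x, f x != x -> mu x < mu (f x)) ->
  forall x, iter B f (f x) = iter B f x.
Proof. by move=> h1 h2 x; rewrite -iterSr /= (iterfix h1 h2). Qed.

Lemma card_inj_le (T T' : finType) (f : T -> T') (P : pred T) (Q : pred T') :
  (forall x, P x -> Q (f x)) -> (forall x y, P x -> P y -> f x = f y -> x = y) ->
  #|[set x | P x]| <= #|[set x | Q x]|.
Proof.
move=> PQ inj; rewrite -(@card_in_imset _ _ f [set x | P x]); last first.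
  by move=> x y; rewrite !inE; apply: inj.
apply: subset_leq_card; apply/subsetP => y /imsetP [x]; rewrite !inE => Px ->.
exact: PQ.
Qed.

Lemma card_bij (T T' : finType) (f : T -> T') (g : T' -> T) (P : pred T) (Q : pred T') :
  (forall x, P x -> Q (f x)) -> (forall x, P x -> g (f x) = x) ->
  (forall x, Q x -> P (g x)) -> (forall x, Q x -> f (g x) = x) ->
  #|[set x | P x]| = #|[set x | Q x]|.
Proof.
move=> PQ gf QP fg; apply/eqP; rewrite eqn_leq; apply/andP; split.
  apply: card_inj_le PQ _ => x y Px Py e; by rewrite -(gf x Px) -(gf y Py) e.
apply: card_inj_le QP _ => x y Px Py e; by rewrite -(fg x Px) -(fg y Py) e.
Qed.

Lemma card_split (T : finType) (P Q : pred T) :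
  #|[set x | P x]| = #|[set x | P x && Q x]| + #|[set x | P x && ~~ Q x]|.
Proof.
rewrite -(cardsID [set x | Q x] [set x | P x]); by apply: f_equal2; apply: eq_card => x; rewrite !inE // andbC.
Qed.

Lemma card_ext (T : finType) (P Q : pred T) : P =1 Q -> #|[set x | P x]| = #|[set x | Q x]|.
Proof. by move=> e; apply: eq_card => x; rewrite !inE e. Qed.

Section Runs.
Variables (n : nat) (G : rel 'I_n).
Hypothesis Gint : forall a b d : 'I_n, a < b -> b < d -> G a d -> G a b && G b d.
Variable H : pred 'I_n.
Hypothesis noTri : forall u v w : 'I_n, H u -> H v -> H w -> u < v -> v < w ->
  G u v -> G v w -> G u w -> False.

Definition upr v w := [&& H v, H w, v < w & G v w].
Definition upf v := if [pick w | upr v w] is Some w then w else v.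
Definition dnf v := if [pick w | upr w v] is Some w then w else v.
Definition hu v := [exists w, upr v w].
Definition hd v := [exists w, upr w v].
Definition topf v := iter n upf v.
Definition botf v := iter n dnf v.

Lemma upr_uniq v w1 w2 : upr v w1 -> upr v w2 -> w1 = w2.
Proof.
move=> /and4P [Hv H1 l1 G1] /and4P [_ H2 l2 G2].
case: (ltngtP w1 w2) => [lt|lt|e]; last exact: val_inj.
  by have /andP [a b] := Gint l1 lt G2; case: (noTri Hv H1 H2 l1 lt a b G2).
by have /andP [a b] := Gint l2 lt G1; case: (noTri Hv H2 H1 l2 lt a b G1).
Qed.

Lemma upr_uniq2 v w1 w2 : upr w1 v -> upr w2 v -> w1 = w2.
Proof.
move=> /and4P [H1 Hv l1 G1] /and4P [H2 _ l2 G2].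
case: (ltngtP w1 w2) => [lt|lt|e]; last exact: val_inj.
  by have /andP [a b] := Gint lt l2 G1; case: (noTri H1 H2 Hv lt l2 a b G1).
by have /andP [a b] := Gint lt l1 G2; case: (noTri H2 H1 Hv lt l1 a b G2).
Qed.

Lemma upfP v w : upr v w -> upf v = w.
Proof.
move=> h; rewrite /upf; case: pickP => [w' h'|/(_ w)]; first exact: upr_uniq h' h.
by rewrite h.
Qed.

Lemma dnfP v w : upr w v -> dnf v = w.
Proof.
move=> h; rewrite /dnf; case: pickP => [w' h'|/(_ w)]; first exact: upr_uniq2 h' h.
by rewrite h.
Qed.

Lemma upf_hu v : hu v -> upr v (upf v).
Proof. by case/existsP => w h; rewrite (upfP h). Qed.

Lemma dnf_hd v : hd v -> upr (dnf v) v.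
Proof. by case/existsP => w h; rewrite (dnfP h). Qed.

Lemma upf_nhu v : ~~ hu v -> upf v = v.
Proof.
move=> nh; rewrite /upf; case: pickP => // w h; case/negP: nh; by apply/existsP; exists w.
Qed.

Lemma dnf_nhd v : ~~ hd v -> dnf v = v.
Proof.
move=> nh; rewrite /dnf; case: pickP => // w h; case/negP: nh; by apply/existsP; exists w.
Qed.

Definition mu1 (x : 'I_n) := (x : nat).
Definition mu2 (x : 'I_n) := n - (x : nat).+1.

Lemma up_mu x : upf x != x -> mu1 x < mu1 (upf x).
Proof.
case: (boolP (hu x)) => h; last by rewrite upf_nhu ?eqxx.
by case/and4P: (upf_hu h).
Qed.

Lemma dn_mu x : dnf x != x -> mu2 x < mu2 (dnf x).
Proof.
case: (boolP (hd x)) => h; last by rewrite dnf_nhd ?eqxx.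
rewrite /mu2; case/and4P: (dnf_hd h) => _ _ lt _ _; have := ltn_ord x; lia.
Qed.

Lemma mu_up x : mu1 x < n. Proof. exact: ltn_ord. Qed.
Lemma mu_dn x : mu2 x < n. Proof. rewrite /mu2; have := ltn_ord x; lia. Qed.

Lemma topf_fix v : upf (topf v) = topf v.
Proof. exact: (iterfix mu_up up_mu). Qed.
Lemma botf_fix v : dnf (botf v) = botf v.
Proof. exact: (iterfix mu_dn dn_mu). Qed.
Lemma topf_up v : topf (upf v) = topf v.
Proof. exact: (iterfixS mu_up up_mu). Qed.
Lemma botf_dn v : botf (dnf v) = botf v.
Proof. exact: (iterfixS mu_dn dn_mu). Qed.

Lemma dn_up v : hu v -> dnf (upf v) = v.
Proof. by move=> h; apply: dnfP; apply: upf_hu. Qed.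
Lemma up_dn v : hd v -> upf (dnf v) = v.
Proof. by move=> h; apply: upfP; apply: dnf_hd. Qed.

Lemma botf_up v : botf (upf v) = botf v.
Proof.
case: (boolP (hu v)) => h; last by rewrite upf_nhu.
by rewrite -botf_dn dn_up.
Qed.
Lemma topf_dn v : topf (dnf v) = topf v.
Proof.
case: (boolP (hd v)) => h; last by rewrite dnf_nhd.
by rewrite -topf_up up_dn.
Qed.

Lemma botf_top v : botf (topf v) = botf v.
Proof. have h : forall i, botf (iter i upf v) = botf v by elim=> //= i IH; rewrite botf_up. exact: h. Qed.
Lemma topf_bot v : topf (botf v) = topf v.
Proof. have h : forall i, topf (iter i dnf v) = topf v by elim=> //= i IH; rewrite topf_dn. exact: h. Qed.
Lemma topf_top v : topf (topf v) = topf v.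
Proof. have h : forall i, topf (iter i upf v) = topf v by elim=> //= i IH; rewrite topf_up. exact: h. Qed.
Lemma botf_bot v : botf (botf v) = botf v.
Proof. have h : forall i, botf (iter i dnf v) = botf v by elim=> //= i IH; rewrite botf_dn. exact: h. Qed.

Lemma H_up v : H (upf v) = H v.
Proof.
case: (boolP (hu v)) => h; last by rewrite upf_nhu.
by case/and4P: (upf_hu h) => -> ->.
Qed.
Lemma H_dn v : H (dnf v) = H v.
Proof.
case: (boolP (hd v)) => h; last by rewrite dnf_nhd.
by case/and4P: (dnf_hd h) => -> ->.
Qed.
Lemma H_top v : H (topf v) = H v.
Proof. have h : forall i, H (iter i upf v) = H v by elim=> //= i IH; rewrite H_up. exact: h. Qed.
Lemma H_bot v : H (botf v) = H v.
Proof. have h : forall i, H (iter i dnf v) = H v by elim=> //= i IH; rewrite H_dn. exact: h. Qed.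

Lemma nhu_top v : ~~ hu (topf v).
Proof.
apply/negP => h; have := upf_hu h; rewrite topf_fix /upr ltnn; by rewrite !andbF.
Qed.
Lemma nhd_bot v : ~~ hd (botf v).
Proof.
apply/negP => h; have := dnf_hd h; rewrite botf_fix /upr ltnn; by rewrite !andbF.
Qed.
Lemma topf_id v : ~~ hu v -> topf v = v.
Proof. by move=> h; apply: iterfixed; apply: upf_nhu. Qed.
Lemma botf_id v : ~~ hd v -> botf v = v.
Proof. by move=> h; apply: iterfixed; apply: dnf_nhd. Qed.

End Runs.

Section Ext.
Variables (n : nat) (G : rel 'I_n) (H1 H2 : pred 'I_n).
Hypothesis eH : H1 =1 H2.
Lemma upr_ext v w : upr G H1 v w = upr G H2 v w.
Proof. by rewrite /upr !eH. Qed.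
Lemma upf_ext : upf G H1 =1 upf G H2.
Proof. move=> v; rewrite /upf (eq_pick (Q := upr G H2 v)) // => w; exact: upr_ext. Qed.
Lemma dnf_ext : dnf G H1 =1 dnf G H2.
Proof. move=> v; rewrite /dnf (eq_pick (Q := fun w => upr G H2 w v)) // => w; exact: upr_ext. Qed.
Lemma hu_ext : hu G H1 =1 hu G H2.
Proof. move=> v; apply: eq_existsb => w; exact: upr_ext. Qed.
Lemma hd_ext : hd G H1 =1 hd G H2.
Proof. move=> v; apply: eq_existsb => w; exact: upr_ext. Qed.
Lemma topf_ext : topf G H1 =1 topf G H2.
Proof. move=> v; apply: eq_iter; exact: upf_ext. Qed.
Lemma botf_ext : botf G H1 =1 botf G H2.
Proof. move=> v; apply: eq_iter; exact: dnf_ext. Qed.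
End Ext.

Section Swap.
Variables (n N : nat) (G : rel 'I_n).
Hypothesis Gsym : symmetric G.
Hypothesis Gint : forall a b d : 'I_n, a < b -> b < d -> G a d -> G a b && G b d.
Variables (c c' : 'I_N).
Hypothesis cc' : (c' : nat) = c.+1.

Definition inH (k : {ffun 'I_n -> 'I_N}) v := (k v == c) || (k v == c').
Definition swc d := if d == c then c' else if d == c' then c else d.
Definition oddr k v := inH k v && (k (topf G (inH k) v) == k (botf G (inH k) v)).
Definition phi k : {ffun 'I_n -> 'I_N} := [ffun v => if oddr k v then swc (k v) else k v].

Lemma c_neq : c != c'.
Proof. by apply/eqP => e; move: cc'; rewrite -e; lia. Qed.
Lemma c_neq' : c' != c.
Proof. by rewrite eq_sym c_neq. Qed.

Lemma swcK : involutive swc.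
Proof.
have h1 := negbTE c_neq; have h2 := negbTE c_neq'.
move=> d; case: (eqVneq d c) => [->|dc]; first by rewrite /swc eqxx h2 eqxx.
case: (eqVneq d c') => [->|dc']; first by rewrite /swc h2 eqxx eqxx.
by rewrite /swc (negbTE dc) (negbTE dc') (negbTE dc) (negbTE dc').
Qed.

Lemma swc_eq x y : (swc x == y) = (x == swc y).
Proof. by rewrite -{1}(swcK y) (inj_eq (can_inj swcK)). Qed.

Lemma swc_inH d : ((swc d == c) || (swc d == c')) = ((d == c) || (d == c')).
Proof.
rewrite /swc; case: ifP => [_|dc]; first by rewrite !eqxx ?orbT.
case: ifP => [_|dc']; first by rewrite !eqxx ?orbT.
by rewrite ?dc ?dc'.
Qed.

Lemma swc_other a b : (a == c) || (a == c') -> (b == c) || (b == c') -> a != b -> b = swc a.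
Proof.
have h2 := negbTE c_neq'.
rewrite /swc; case/orP => /eqP -> ; case/orP => /eqP -> ; rewrite ?eqxx ?h2 //.
Qed.

Lemma properP (k : {ffun 'I_n -> 'I_N}) i j : proper_col G k -> G i j -> k i != k j.
Proof. move=> pk g; move/forallP: pk => /(_ i) /forallP /(_ j) /implyP; exact. Qed.

Lemma noTri_k (k : {ffun 'I_n -> 'I_N}) : proper_col G k -> forall u v w : 'I_n, inH k u -> inH k v -> inH k w ->
  u < v -> v < w -> G u v -> G v w -> G u w -> False.
Proof.
move=> pk u v w hu hv hw _ _ g1 g2 g3.
have := properP pk g1; have := properP pk g2; have := properP pk g3.
move: hu hv hw; rewrite /inH.
by case/orP => /eqP -> ; case/orP => /eqP -> ; case/orP => /eqP -> ; rewrite ?eqxx.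
Qed.

Section K.
Variable k : {ffun 'I_n -> 'I_N}.
Hypothesis pk : proper_col G k.
Local Notation Hk := (inH k).
Let nT := noTri_k pk.
Local Notation up := (upf G Hk).
Local Notation dn := (dnf G Hk).
Local Notation top := (topf G Hk).
Local Notation bot := (botf G Hk).
Local Notation hu' := (hu G Hk).
Local Notation hd' := (hd G Hk).

Lemma col_up v : hu' v -> k (up v) = swc (k v).
Proof.
move=> h; have /and4P [h1 h2 _ g] := upf_hu Gint nT h.
exact: swc_other h1 h2 (properP pk g).
Qed.

Lemma oddr_up v : oddr k (up v) = oddr k v.
Proof. by rewrite /oddr (H_up Gint nT) (topf_up Gint nT) (botf_up Gint nT). Qed.
Lemma oddr_dn v : oddr k (dn v) = oddr k v.
Proof. by rewrite /oddr (H_dn Gint nT) (topf_dn Gint nT) (botf_dn Gint nT). Qed.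
Lemma oddr_top v : oddr k (top v) = oddr k v.
Proof. by rewrite /oddr (H_top Gint nT) (topf_top Gint nT) (botf_top Gint nT). Qed.
Lemma oddr_bot v : oddr k (bot v) = oddr k v.
Proof. by rewrite /oddr (H_bot Gint nT) (topf_bot Gint nT) (botf_bot Gint nT). Qed.

Lemma inH_phi : inH (phi k) =1 inH k.
Proof.
move=> v; rewrite /inH ffunE; case: ifP => // _; exact: swc_inH.
Qed.

Lemma oddr_phi : oddr (phi k) =1 oddr k.
Proof.
move=> v; rewrite /oddr inH_phi (topf_ext G inH_phi) (botf_ext G inH_phi) !ffunE.
rewrite oddr_top oddr_bot; case: (oddr k v); last by [].
by rewrite (inj_eq (can_inj swcK)).
Qed.

Lemma phiK : phi (phi k) = k.
Proof.
apply/ffunP => v; rewrite !ffunE oddr_phi; case: (oddr k v) => //; exact: swcK.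
Qed.

Lemma oddr_inH v : oddr k v -> inH k v.
Proof. by case/andP. Qed.

Lemma oddr_edge i j : inH k i -> inH k j -> G i j -> oddr k i = oddr k j.
Proof.
move=> hi hj g; have ne := properP pk g.
case: (ltngtP i j) => [lt|lt|e].
- have u : upr G Hk i j by rewrite /upr hi hj lt g.
  by rewrite -(upfP Gint nT u) oddr_up.
- have u : upr G Hk j i by rewrite /upr hi hj lt (Gsym j i) g.
  by rewrite -(upfP Gint nT u) oddr_up.
- by move: ne; rewrite (val_inj e) eqxx.
Qed.

Lemma phi_inH v : inH k v -> inH (phi k) v.
Proof. by rewrite inH_phi. Qed.

Lemma phi_proper : proper_col G (phi k).
Proof.
apply/forallP => i; apply/forallP => j; apply/implyP => g.
have ne := properP pk g.
case Hi: (inH k i); case Hj: (inH k j).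
- rewrite !ffunE (oddr_edge Hi Hj g); case: (oddr k j) => //.
  by rewrite (inj_eq (can_inj swcK)).
- apply/eqP => e; have h1 := inH_phi j; have h2 := inH_phi i.
  rewrite Hi in h2; rewrite Hj in h1; move: h1 h2.
  by rewrite /inH -e => ->.
- apply/eqP => e; have h1 := inH_phi j; have h2 := inH_phi i.
  rewrite Hi in h2; rewrite Hj in h1; move: h1 h2.
  by rewrite /inH e => ->.
- rewrite !ffunE; have -> : oddr k i = false by rewrite /oddr Hi.
  by have -> : oddr k j = false by rewrite /oddr Hj.
Qed.

Lemma cnt_up (Q : pred 'I_n) a : (forall v, Q (up v) = Q v) -> (a == c) || (a == c') ->
  #|[set v | [&& Q v, k v == a & hu' v]]| = #|[set v | [&& Q v, k v == swc a & hd' v]]|.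
Proof.
move=> Qup ha; apply: (card_bij (f := up) (g := dn)).
- move=> x /and3P [q ka h]; rewrite Qup q col_up // (eqP ka) eqxx /=.
  apply/existsP; exists x; exact: upf_hu.
- move=> x /and3P [_ _ h]; exact: dn_up.
- move=> y /and3P [q kb h]; have e : up (dn y) = y := up_dn Gint nT h.
  have hu_dn : hu' (dn y) by apply/existsP; exists y; exact: dnf_hd.
  have := col_up hu_dn; rewrite e (eqP kb) => e2.
  by rewrite -Qup e q -(swcK (k (dn y))) -e2 swcK eqxx hu_dn.
- move=> y /and3P [_ _ h]; exact: up_dn.
Qed.

Lemma cnt_end (Q : pred 'I_n) a a' : (forall v, Q (top v) = Q v) -> (forall v, Q (bot v) = Q v) ->
  (forall v, Q v -> (k (top v) == a) = (k (bot v) == a')) ->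
  #|[set v | [&& Q v, k v == a & ~~ hu' v]]| = #|[set v | [&& Q v, k v == a' & ~~ hd' v]]|.
Proof.
move=> Qt Qb hyp; apply: (card_bij (f := bot) (g := top)).
- move=> x /and3P [q ka h]; have tx : top x = x by apply: topf_id.
  rewrite Qb q -hyp // tx ka /=; exact: nhd_bot.
- move=> x /and3P [q ka h]; have tx : top x = x by apply: topf_id.
  by rewrite (topf_bot Gint nT) tx.
- move=> y /and3P [q ka h]; have by' : bot y = y by apply: botf_id.
  rewrite Qt q hyp // by' ka /=; exact: nhu_top.
- move=> y /and3P [q ka h]; have by' : bot y = y by apply: botf_id.
  by rewrite (botf_top Gint nT) by'.
Qed.

Definition Qe v := inH k v && ~~ oddr k v.

Lemma inH_top v : inH k (top v) = inH k v.
Proof. exact: (H_top Gint nT). Qed.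
Lemma inH_bot v : inH k (bot v) = inH k v.
Proof. exact: (H_bot Gint nT). Qed.

Lemma card_split3 (Q : pred 'I_n) a :
  #|[set v | Q v && (k v == a)]| =
  #|[set v | [&& Q v, k v == a & hu' v]]| + #|[set v | [&& Q v, k v == a & ~~ hu' v]]|.
Proof.
rewrite (card_split _ hu'); congr (_ + _); apply: card_ext => v; by rewrite andbA.
Qed.
Lemma card_split3' (Q : pred 'I_n) a :
  #|[set v | Q v && (k v == a)]| =
  #|[set v | [&& Q v, k v == a & hd' v]]| + #|[set v | [&& Q v, k v == a & ~~ hd' v]]|.
Proof.
rewrite (card_split _ hd'); congr (_ + _); apply: card_ext => v; by rewrite andbA.
Qed.

Lemma cnt_even a : (a == c) || (a == c') ->
  #|[set v | Qe v && (k v == a)]| = #|[set v | Qe v && (k v == swc a)]|.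
Proof.
move=> ha; rewrite card_split3 card_split3' cnt_up; last by [].
  2: by move=> v; rewrite /Qe (H_up Gint nT) oddr_up.
congr (_ + _); apply: cnt_end.
- by move=> v; rewrite /Qe inH_top oddr_top.
- by move=> v; rewrite /Qe inH_bot oddr_bot.
- move=> v /andP [hv]; rewrite /oddr hv /= => ne.
  have t1 : inH k (top v) by rewrite inH_top.
  have t2 : inH k (bot v) by rewrite inH_bot.
  by rewrite (swc_other t1 t2 ne) (inj_eq (can_inj swcK)).
Qed.

Lemma cnt_phi d : #|[set v | phi k v == d]| = #|[set v | k v == swc d]|.
Proof.
case hd: ((d == c) || (d == c')); last first.
  have sd : swc d = d by rewrite /swc; move: hd; case: (d == c) => //; case: (d == c').
  rewrite sd; apply: card_ext => v; rewrite ffunE; case: ifP => // o.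
  have hv := oddr_inH o.
  have h1 : (k v == d) = false by apply/negbTE/eqP => e; move: hv; rewrite /inH e hd.
  have h2 : (swc (k v) == d) = false.
    by apply/negbTE/eqP => e; move: hv; rewrite /inH -swc_inH e hd.
  by rewrite h1 h2.
rewrite (card_split _ (oddr k)) (card_split (fun v => k v == swc d) (oddr k)).
congr (_ + _).
  apply: card_ext => v; rewrite ffunE; case: (oddr k v); rewrite ?andbT ?andbF //.
  by rewrite -{1}(swcK d) (inj_eq (can_inj swcK)).
have e1 : forall a, (a == c) || (a == c') -> #|[set v | (k v == a) && ~~ oddr k v]| = #|[set v | Qe v && (k v == a)]|.
  move=> a ha; apply: card_ext => v; rewrite /Qe andbC; case: (eqVneq (k v) a) => [e|]; rewrite ?andbT ?andbF //.
  by rewrite /inH e ha.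
transitivity #|[set v | (k v == d) && ~~ oddr k v]|.
  by apply: card_ext => v; rewrite /phi ffunE; case: (oddr k v); rewrite ?andbF.
apply: etrans (e1 d hd) _; apply: etrans _ (esym (e1 (swc d) _)); last by rewrite swc_inH.
exact: cnt_even.
Qed.


Lemma col_nat (x : 'I_N) : (x == c) || (x == c') -> (x : nat) = c \/ (x : nat) = c.+1.
Proof. by case/orP => /eqP ->; [left|right]. Qed.

Lemma ncol_nat (x : 'I_N) : ~~ ((x == c) || (x == c')) -> (x : nat) <> c /\ (x : nat) <> c.+1.
Proof.
move=> h; split=> e; case/negP: h; apply/orP; [left|right]; apply/eqP/val_inj => //=.
by rewrite e cc'.
Qed.

Lemma lt_col (x y z : 'I_N) : (x == c) || (x == c') -> (y == c) || (y == c') ->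
  ~~ ((z == c) || (z == c')) -> ((x < z) = (y < z)) /\ ((z < x) = (z < y)).
Proof.
move=> /col_nat hx /col_nat hy /ncol_nat [h1 h2].
split; apply/idP/idP; lia.
Qed.

Lemma phi_col v : inH k v -> (phi k v == c) || (phi k v == c').
Proof. by move=> h; have := inH_phi v; rewrite /inH => ->. Qed.

Lemma phi_out v : ~~ inH k v -> phi k v = k v.
Proof. by move=> h; rewrite /phi ffunE /oddr (negbTE h). Qed.

Lemma lt_phi_nb i j : ~~ (inH k i && inH k j) -> (phi k i < phi k j) = (k i < k j).
Proof.
case Hi: (inH k i); case Hj: (inH k j) => //= _.
- rewrite (phi_out (negbT Hj)); case: (lt_col (phi_col Hi) Hi (negbT Hj)) => -> //.
- rewrite (phi_out (negbT Hi)); case: (lt_col (phi_col Hj) Hj (negbT Hi)) => _ -> //.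
- by rewrite (phi_out (negbT Hi)) (phi_out (negbT Hj)).
Qed.

Definition ascp (k0 : {ffun 'I_n -> 'I_N}) (p : 'I_n * 'I_n) :=
  [&& (p.1 < p.2), G p.1 p.2 & (k0 p.1 < k0 p.2)].

Lemma asc_in :
  #|[set p | ascp k p && (inH k p.1 && inH k p.2)]| = #|[set v | (k v == c) && hu' v]|.
Proof.
apply: (card_bij (f := fun p => p.1) (g := fun v => (v, up v))).
- move=> [i j] /= /andP [/and3P [lt g ka] /andP [hi hj]].
  have u : upr G Hk i j by rewrite /upr hi hj lt g.
  apply/andP; split; last by apply/existsP; exists j.
  have := col_nat hi; have := col_nat hj; move: ka.
  case: (eqVneq (k i) c) => // ne.
  have ne' : (k i : nat) <> c by move=> e; case/eqP: ne; apply: val_inj.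
  move=> ka' hkj hki; rewrite /= in ka'; exfalso; lia.
- move=> [i j] /= /andP [/and3P [lt g ka] /andP [hi hj]].
  have u : upr G Hk i j by rewrite /upr hi hj lt g.
  by rewrite (upfP Gint nT u).
- move=> v /andP [kc h]; have u := upf_hu Gint nT h.
  have := u; rewrite /upr => /and4P [hv hw lt g] /=.
  rewrite /ascp /= lt g hv hw /= andbT.
  by rewrite col_up // (eqP kc) /swc eqxx -ltnS -cc'.
- by [].
Qed.

Lemma asc_split : asc G k =
  #|[set p | ascp k p && ~~ (inH k p.1 && inH k p.2)]| + #|[set v | (k v == c) && hu' v]|.
Proof.
transitivity #|[set p | ascp k p]|; first by [].
by rewrite (card_split _ (fun p => inH k p.1 && inH k p.2)) asc_in addnC.
Qed.

Lemma swc_c : swc c = c'. Proof. by rewrite /swc eqxx. Qed.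

Lemma cnt_asc_H : #|[set v | (phi k v == c) && hu' v]| = #|[set v | (k v == c) && hu' v]|.
Proof.
rewrite (card_split (fun v => (phi k v == c) && hu' v) (oddr k)).
rewrite (card_split (fun v => (k v == c) && hu' v) (oddr k)).
apply: f_equal2; last first.
  by apply: card_ext => v; rewrite /phi ffunE; case: (oddr k v); rewrite ?andbF.
transitivity #|[set v | [&& oddr k v, k v == c' & hu' v]]|.
  apply: card_ext => v; rewrite /phi ffunE; case: (oddr k v); rewrite ?andbF //=.
  by rewrite andbT swc_eq swc_c.
transitivity #|[set v | [&& oddr k v, k v == c & hu' v]]|; last first.
  by apply: card_ext => v; rewrite andbC andbA.
symmetry; rewrite cnt_up; last by rewrite eqxx.
  2: by move=> v; rewrite oddr_up.
rewrite swc_c.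
have e1 := card_split3' (oddr k) c'; have e2 := card_split3 (oddr k) c'.
have e3 : #|[set v | [&& oddr k v, k v == c' & ~~ hu' v]]| =
          #|[set v | [&& oddr k v, k v == c' & ~~ hd' v]]|.
  apply: cnt_end; [exact: oddr_top | exact: oddr_bot|].
  by move=> v /andP [_ /eqP ->].
by move: e1; rewrite e2 e3 => /addIn.
Qed.
End K.

Lemma asc_phi k : proper_col G k -> asc G (phi k) = asc G k.
Proof.
move=> pk; rewrite (asc_split pk) (asc_split (phi_proper pk)).
apply: f_equal2.
  apply: card_ext => p; rewrite !(inH_phi k); case hb: (inH k p.1 && inH k p.2); first by rewrite !andbF.
  by rewrite !andbT /ascp lt_phi_nb ?hb.
transitivity #|[set v | (phi k v == c) && hu G (inH k) v]|.
  by apply: card_ext => v; rewrite (hu_ext G (inH_phi k)).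
exact: (cnt_asc_H pk).
Qed.

Definition Phi k := if proper_col G k then phi k else k.

Lemma PhiK : involutive Phi.
Proof.
move=> k; rewrite /Phi; case pk: (proper_col G k); last by rewrite pk.
by rewrite (phi_proper pk) (phiK pk).
Qed.

Lemma chrom_swap (alpha : 'I_N -> nat) :
  chromQS_coef G alpha = chromQS_coef G (fun d => alpha (swc d)).
Proof.
rewrite /chromQS_coef (reindex_inj (can_inj PhiK)).
apply: eq_big => k; last first.
  by move=> _; rewrite /Phi; case pk: (proper_col G k) => //; rewrite (asc_phi pk).
rewrite /Phi; case pk: (proper_col G k); last by rewrite pk.
rewrite (phi_proper pk) /=.
apply/forallP/forallP => h d.
  by have := h (swc d); rewrite (cnt_phi pk) swcK.
by rewrite (cnt_phi pk); have := h (swc d); rewrite swcK.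
Qed.
End Swap.

Lemma chrom_alpha_ext n (G : rel 'I_n) N (a b : 'I_N -> nat) : a =1 b ->
  chromQS_coef G a = chromQS_coef G b.
Proof.
move=> e; rewrite /chromQS_coef; apply: eq_bigl => k; congr andb.
by apply: eq_forallb => d; rewrite e.
Qed.

Section Perm.
Variables (n N : nat) (G : rel 'I_n).
Hypothesis Gsym : symmetric G.
Hypothesis Gint : forall a b d : 'I_n, a < b -> b < d -> G a d -> G a b && G b d.
Local Notation F := (@chromQS_coef n G N).

Lemma swc_tperm (c c' : 'I_N) (cc' : (c' : nat) = c.+1) d : swc c c' d = tperm c c' d.
Proof.
have ne := negbTE (c_neq' cc').
case: tpermP => [->|->|n1 n2]; rewrite /swc ?eqxx ?ne //.
by rewrite (introF eqP n1) (introF eqP n2).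
Qed.

Lemma inv_adj (c c' : 'I_N) : (c' : nat) = c.+1 -> forall a, F a = F (fun d => a (tperm c c' d)).
Proof.
move=> cc' a; rewrite (chrom_swap Gsym Gint cc'); apply: chrom_alpha_ext => d.
by rewrite swc_tperm.
Qed.

Lemma inv_gap (d : nat) : forall (i j : 'I_N), (j : nat) = i + d.+1 ->
  forall a, F a = F (fun x => a (tperm i j x)).
Proof.
elim: d => [|d IH] i j e a; first by apply: inv_adj; rewrite e addn1.
have lt : i + d.+1 < N by have := ltn_ord j; lia.
set j1 := Ordinal lt.
have e1 : tperm i j = (tperm i j1 ^ tperm j1 j)%g.
  rewrite tpermJ tpermL tpermD // -val_eqE /= ?e; lia.
have adj : (j : nat) = (j1 : nat).+1 by rewrite /= e; lia.
rewrite e1 (inv_adj adj) (IH i j1) //.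
rewrite (inv_adj adj); apply: chrom_alpha_ext => x.
by rewrite conjgE !permM tpermV.
Qed.

Lemma inv_tperm (i j : 'I_N) a : F a = F (fun x => a (tperm i j x)).
Proof.
case: (ltngtP i j) => [lt|lt|e].
- apply: (inv_gap (d := j - i.+1)); lia.
- rewrite tpermC; apply: (inv_gap (d := i - j.+1)); lia.
- have -> : i = j by apply: val_inj.
  by apply: chrom_alpha_ext => x; rewrite tperm1 perm1.
Qed.

Lemma inv_perm (s : {perm 'I_N}) a : F a = F (fun x => a (s x)).
Proof.
have [ts -> _] := prod_tpermP s.
elim: ts a => [|t ts IH] a.
  by apply: chrom_alpha_ext => x; rewrite big_nil perm1.
rewrite big_cons (IH a) (inv_tperm t.1 t.2); apply: chrom_alpha_ext => x.
by rewrite permM.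
Qed.

Lemma inv_rev a : F a = F (fun x => a (rev_ord x)).
Proof.
rewrite (inv_perm (perm (@rev_ord_inj N))); apply: chrom_alpha_ext => x.
by rewrite permE.
Qed.
End Perm.

Lemma rev_lt N (x y : 'I_N) : (rev_ord x < rev_ord y) = (y < x).
Proof. have := ltn_ord x; have := ltn_ord y; rewrite /= => ? ?; apply/idP/idP; lia. Qed.

Lemma rev_eq N (x y : 'I_N) : (rev_ord x == y) = (x == rev_ord y).
Proof. by rewrite -{1}(rev_ordK y) (inj_eq rev_ord_inj). Qed.

Lemma chrom_rev n N (G : rel 'I_n) (Gsym : symmetric G) (a : 'I_N -> nat) :
  chromQS_coef (fun x y => G (rev_ord x) (rev_ord y)) a =
  chromQS_coef G (fun d => a (rev_ord d)).
Proof.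
pose h := fun k0 : {ffun 'I_n -> 'I_N} => [ffun v => rev_ord (k0 (rev_ord v))].
have hK : involutive h by move=> k0; apply/ffunP => v; rewrite !ffunE !rev_ordK.
rewrite /chromQS_coef (reindex_inj (inv_inj hK)).
apply: eq_big => k0; last first.
  move=> _; congr (GRing.exp 'X); rewrite /asc.
  apply: (card_bij (f := fun p => (rev_ord p.2, rev_ord p.1)) (g := fun p => (rev_ord p.2, rev_ord p.1))).
  - move=> [i j] /and3P [lt g kl] /=; rewrite !ffunE !rev_lt in kl.
    by rewrite rev_lt lt Gsym g kl.
  - by move=> [i j] _ /=; rewrite !rev_ordK.
  - move=> [i j] /and3P [lt g kl] /=; rewrite !ffunE !rev_ordK !rev_lt.
    by rewrite /= in lt g kl; rewrite lt Gsym g kl.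
  - by move=> [i j] _ /=; rewrite !rev_ordK.
congr andb.
  apply/forallP/forallP => P i.
    apply/forallP => j; apply/implyP => g.
    have := P (rev_ord i); move/forallP => /(_ (rev_ord j)) /implyP.
    by rewrite !rev_ordK !ffunE !rev_ordK (inj_eq rev_ord_inj) => ->.
  apply/forallP => j; apply/implyP => g.
  rewrite !ffunE (inj_eq rev_ord_inj).
  by have := P (rev_ord i); move/forallP => /(_ (rev_ord j)) /implyP ->.
have ec : forall d, #|[set v | h k0 v == d]| = #|[set v | k0 v == rev_ord d]|.
  move=> d; apply: (card_bij (f := @rev_ord n) (g := @rev_ord n)).
  - by move=> x; rewrite ffunE rev_eq.
  - by move=> x _; rewrite rev_ordK.
  - by move=> x; rewrite ffunE rev_ordK rev_eq.
  - by move=> x _; rewrite rev_ordK.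
apply/forallP/forallP => P d.
  by have := P (rev_ord d); rewrite ec rev_ordK.
by rewrite ec; have := P (rev_ord d); rewrite rev_ordK.
Qed.
From Stdlib Require Import Setoid.

Definition Rp (s : seq bool) (a b : nat) :=
  exists k, a <= count id (take k s) /\ count negb (take k s) < b.

Lemma Rp_true s a b : Rp (true :: s) a b <-> (a = 0 /\ 0 < b) \/ Rp s a.-1 b.
Proof.
split.
  case=> [[|k]] /=; first by rewrite /=; move=> [h1 h2]; left; split => //; lia.
  move=> [h1 h2]; right; exists k; split; lia.
case=> [[-> h]|[k [h1 h2]]]; first by exists 0.
exists k.+1 => /=; split; lia.
Qed.

Lemma Rp_false s a b : Rp (false :: s) a b <-> (a = 0 /\ 0 < b) \/ Rp s a b.-1.
Proof.
split.
  case=> [[|k]] /=; first by rewrite /=; move=> [h1 h2]; left; split => //; lia.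
  move=> [h1 h2]; right; exists k; split; lia.
case=> [[-> h]|[k [h1 h2]]]; first by exists 0.
exists k.+1 => /=; split; lia.
Qed.

Lemma Rp_nil a b : Rp [::] a b <-> a = 0 /\ 0 < b.
Proof.
split; first by case=> k /=; case: k => [|k] /= [h1 h2]; split => //; lia.
by case=> -> h; exists 0.
Qed.

Lemma Rp_nseq d t a b : Rp (nseq d true ++ t) a b <-> (a <= d /\ 0 < b) \/ Rp t (a - d) b.
Proof.
elim: d a => [|d IH] a /=.
  rewrite subn0; split; first by right.
  case=> // [[h1 h2]]; have -> : a = 0 by lia.
  by exists 0; rewrite take0.
rewrite Rp_true IH; split.
  case=> [[-> h]|]; first by left.
  case=> [[h1 h2]|h]; first by left; split => //; lia.
  by right; have -> : a - d.+1 = a.-1 - d by lia.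
case=> [[h1 h2]|h].
  case: a h1 => [|a] h1; first by left.
  by right; left; split => //; lia.
by right; right; have -> : a.-1 - d = a - d.+1 by lia.
Qed.

Definition cpath (ds : seq nat) := flatten [seq rcons (nseq d true) false | d <- ds].

Lemma Rp_cpath ds a b : Rp (cpath ds) a b <-> 0 < b /\ a <= sumn (take b ds).
Proof.
elim: ds a b => [|d ds IH] a b.
  rewrite /cpath /= Rp_nil; split; case=> h1 h2; split => //; lia.
rewrite /cpath /= cat_rcons -/(cpath ds) Rp_nseq Rp_false IH.
case: b => [|[|b]] /=.
- split; [case; case; lia | case; lia].
- rewrite take0 /=; split; [case; [case|case; [case|case]]; lia | case=> _ h; left; split => //; lia].
- split.
    case; [case=> h _; split => //; lia | case; [case=> h _; split => //; lia| case=> _ h; split => //; lia]].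
  case=> _ h; case: (leqP a d) => h'; [left; split => //| right; right; split => //]; lia.
Qed.

Lemma count_cpath ds : count id (cpath ds) = sumn ds /\ count negb (cpath ds) = size ds.
Proof.
elim: ds => [|d ds [IH1 IH2]] //=.
rewrite /cpath /= -/(cpath ds) !count_cat -cats1 !count_cat !count_nseq /= IH1 IH2.
split; lia.
Qed.

Lemma sum_pairmap (h : seq nat) x0 b : sorted leq (x0 :: h) -> b <= size h ->
  sumn (take b (pairmap (fun a b => b - a) x0 h)) + x0 = nth x0 (x0 :: h) b.
Proof.
elim: h x0 b => [|y h IH] x0 [|b] //= /andP [le sh] hb.
have := IH y b sh hb => IH'.
rewrite (@set_nth_default _ (y :: h) y x0) /=; last by [].
rewrite -IH' /=; lia.
Qed.

Lemma count_nn (d : seq bool) : count (preim negb negb) d = count id d.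
Proof. by apply: eq_count => z; rewrite /= negbK. Qed.
Lemma count_ni (d : seq bool) : count (preim negb id) d = count negb d.
Proof. by apply: eq_count. Qed.

Lemma Rp_reflect s n A B : count id s = n -> count negb s = n -> A <= n ->
  Rp (rev (map negb s)) A B <-> Rp s (n.+1 - B) (n.+1 - A).
Proof.
move=> ht hf hA.
have hsz : size s = n + n.
  by rewrite -(count_predC id s) ht -hf; congr addn; apply: eq_count.
have ct j : count id (take j s) + count id (drop j s) = n by rewrite -count_cat cat_take_drop.
have cf j : count negb (take j s) + count negb (drop j s) = n by rewrite -count_cat cat_take_drop.
split.
  case=> k [h1 h2]; rewrite take_rev size_map -map_drop count_rev count_map count_ni in h1.
  rewrite take_rev size_map -map_drop count_rev count_map count_nn in h2.
  exists (size s - k); have := ct (size s - k); have := cf (size s - k); split; lia.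
case=> j [h1 h2].
have [jle|jgt] := leqP j (n + n); last first.
  have e : take j s = take (n + n) s by rewrite !take_oversize ?hsz // ltnW.
  rewrite e in h1 h2.
  exists 0; rewrite take_rev size_map -map_drop !count_rev !count_map count_ni count_nn.
  rewrite subn0 drop_size /=; rewrite -hsz take_size ht hf in h1 h2; lia.
exists (n + n - j); rewrite take_rev size_map -map_drop !count_rev !count_map count_ni count_nn.
rewrite hsz (_ : n + n - (n + n - j) = j); last by lia.
have := ct j; have := cf j; split; lia.
Qed.

Lemma chrom_graph_ext n N (G1 G2 : rel 'I_n) (a : 'I_N -> nat) : G1 =2 G2 ->
  chromQS_coef G1 a = chromQS_coef G2 a.
Proof.
move=> e; rewrite /chromQS_coef; apply: eq_big => k.
  congr andb; rewrite /proper_col; apply: eq_forallb => i; apply: eq_forallb => j.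
  by rewrite e.
move=> _; rewrite /asc; congr (GRing.exp 'X); apply: eq_card => p; by rewrite !inE e.
Qed.

Lemma inc_sym n m : ssrbool.symmetric (@inc_graph n m).
Proof. by move=> a b; rewrite /inc_graph orbC. Qed.

Lemma inc_irr n m (a : 'I_n) : @inc_graph n m a a = false.
Proof. by rewrite /inc_graph ltnn. Qed.

Lemma inc_lt_eq n m (a b : 'I_n) : a < b -> @inc_graph n m a b = (b < nth 0 m a).
Proof. move=> lt; rewrite /inc_graph lt /=; have -> : (b < a) = false by apply/negbTE; rewrite -leqNgt ltnW. by rewrite orbF. Qed.

Lemma inc_int n m : nuio n m ->
  forall a b d : 'I_n, a < b -> b < d -> @inc_graph n m a d -> @inc_graph n m a b && @inc_graph n m b d.
Proof.
case/and4P => /eqP sz so _ _ a b d l1 l2.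
rewrite !inc_lt_eq //; last by apply: ltn_trans l2.
move=> h; rewrite (ltn_trans l2 h) /=.
apply: leq_trans h _.
have hd := ltn_ord d.
apply: (sorted_leq_nth leq_trans leqnn 0 so); rewrite ?inE ?sz; try lia.
Qed.

Lemma nuio_sorted n m : nuio n m -> sorted leq (0 :: rcons m n).
Proof.
case/and4P => _ so al _ /=; rewrite rcons_path; apply/andP; split.
  by case: m so {al} => //= x m ->.
have := mem_last 0 m; rewrite inE; case/orP => [/eqP -> //|h].
exact: (allP al).
Qed.

Lemma nuio_sum n m b : nuio n m -> b <= n ->
  sumn (take b (pairmap (fun a b => b - a) 0 (rcons m n))) = nth 0 (0 :: rcons m n) b.
Proof.
move=> hm hb; have hs := nuio_sorted hm.
have := sum_pairmap hs; rewrite size_rcons; case/and4P: hm => /eqP -> _ _ _.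
move=> h; rewrite -[LHS]addn0 h //; lia.
Qed.

Lemma cat_counts n m : 0 < n -> nuio n m ->
  count id (catalan_path n m) = n /\ count negb (catalan_path n m) = n.
Proof.
move=> n0 hm; have [h1 h2] := count_cpath (pairmap (fun a b => b - a) 0 (rcons m n)).
rewrite /catalan_path -/(cpath _) h1 h2 size_pairmap size_rcons.
have hsz : size m = n.-1 by case/and4P: hm => /eqP.
have e := nuio_sum hm (leqnn n).
rewrite take_oversize in e; last by rewrite size_pairmap size_rcons hsz; lia.
rewrite e; move: n0 hsz; clear; case: n => [|n] //= _ hsz.
by rewrite nth_rcons hsz ltnn eqxx; split.
Qed.

Lemma inc_Rp n m (hm : nuio n m) (a b : 'I_n) : a < b ->
  (@inc_graph n m a b <-> Rp (catalan_path n m) b.+1 a.+1).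
Proof.
move=> lt; rewrite inc_lt_eq // /catalan_path -/(cpath _) Rp_cpath nuio_sum //.
have hsz : size m = n.-1 by case/and4P: hm => /eqP.
have hb := ltn_ord b.
rewrite /= nth_rcons hsz (_ : a < n.-1); last by lia.
by split; [move=> h; split | case=> _ h].
Qed.

Lemma inc_refl n m m' : 0 < n -> nuio n m -> nuio n m' ->
  catalan_path n m' = reflect_path (catalan_path n m) ->
  forall a b : 'I_n, @inc_graph n m' a b = @inc_graph n m (rev_ord a) (rev_ord b).
Proof.
move=> n0 hm hm' hp.
have [ct cf] := cat_counts n0 hm.
have key : forall a b : 'I_n, a < b -> @inc_graph n m' a b = @inc_graph n m (rev_ord a) (rev_ord b).
  move=> a b lt; have lt' : rev_ord b < rev_ord a by rewrite rev_lt.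
  have hb := ltn_ord b.
  have e1 : (rev_ord a : nat).+1 = n.+1 - a.+1 by rewrite /=; lia.
  have e2 : (rev_ord b : nat).+1 = n.+1 - b.+1 by rewrite /=; lia.
  rewrite (@inc_sym n m (rev_ord a)); apply/idP/idP => h.
  - have := proj1 (inc_Rp hm' lt) h; rewrite hp /reflect_path (@Rp_reflect _ _ _ _ ct cf); last by lia.
    by rewrite -e1 -e2 => /(inc_Rp hm lt').
  - have := proj1 (inc_Rp hm lt') h; rewrite e1 e2 -(@Rp_reflect _ _ _ _ ct cf); last by lia.
    by move=> h2; apply/(proj2 (inc_Rp hm' lt)); rewrite hp.
move=> a b; case: (ltngtP a b) => [lt|lt|e].
- exact: key.
- by rewrite inc_sym key // inc_sym.
- by rewrite (val_inj e) !inc_irr.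
Qed.

Theorem lemma2p17 (n : nat) (m m' : seq nat) :
  nuio n m -> nuio n m' ->
  catalan_path n m' = reflect_path (catalan_path n m) ->
  forall (N : nat) (alpha : 'I_N -> nat),
    chromQS_coef (@inc_graph n m) alpha = chromQS_coef (@inc_graph n m') alpha.
Proof.
move=> hm hm' hp N alpha.
case: n hm hm' hp => [|n] hm hm' hp.
  by apply: chrom_graph_ext => -[].
rewrite (chrom_graph_ext _ (inc_refl (ltn0Sn n) hm hm' hp)).
rewrite (chrom_rev (@inc_sym n.+1 m)).
exact: (inv_rev (@inc_sym n.+1 m) (inc_int hm)).
Qed.
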